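(* Let $n_1,n_2,n_3\in\mathbb{N}$, let $\sigma$ be a segment label map on $G=\{1,\dots,n_1\}\times\{1,\dots,n_2\}\times\{1,\dots,n_3\}$, fix any decomposition of $T$ into blocks, let $\tau=\mathrm{LABEL}(\sigma,T)$ and let $\tau'$ be the output of the block-wise method. Then for all 1-cells $u,v\in T$: $\tau'(u)=\tau'(v)\Rightarrow\tau(u)=\tau(v)$.
   Context: Voxel grid and segmentation: $G=\{1,\dots,n_1\}\times\{1,\dots,n_2\}\times\{1,\dots,n_3\}$; voxels $v,w$ are adjacent iff $\sum_i|v_i-w_i|=1$. A segment label map is $\sigma:G\to\mathbb{N}=\{1,2,\dots\}$ such that each level set $\sigma^{-1}(l)$ is connected w.r.t. this adjacency. Topological grid: $T=\{1,\dots,2n_1-1\}\times\{1,\dots,2n_2-1\}\times\{1,\dots,2n_3-1\}$; a cell with exactly $j$ odd coordinates is a $j$-cell. Voxel $r$ corresponds to the 3-cell $2r-1$. Two cells are 6-neighbors if they differ by $1$ in exactly one coordinate. For a $j$-cell $t$, $\Gamma(t)$ is the set of 6-neighbors of $t$ in $T$ that are $(j+1)$-cells. Cells $t_1,t_2$ are connected, $t_1\leftrightarrow t_2$, iff there is $t\in T$ with $t_1,t_2\in\Gamma(t)$. Procedure LABEL: for a voxel box $\prod_i\{a_i,\dots,b_i\}\subseteq G$ let $B=\prod_i\{2a_i-1,\dots,2b_i-1\}$ be its cell box. $\mathrm{LABEL}(\sigma,B)$ produces $\lambda:B\to\mathbb{N}_0$: (1) $\lambda(2r-1)=\sigma(r)$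 for 3-cells. (2) For $j=2,1,0$ in this order: for each $j$-cell $t\in B$ let $\theta(t)$ be the set of positive integers occurring exactly once in $(\lambda(s))_{s\in\Gamma(t)}$; $t$ is active iff $\theta(t)\ne\emptyset$, inactive $j$-cells get label $0$; the active $j$-cells of $B$ are partitioned into maximal sets of cells with equal $\theta$ that are connected by $\leftrightarrow$-paths inside the set; these classes are numbered $1,\dots,m_j(B)$ arbitrarily and each active $j$-cell gets its class number. Reference labeling: $\tau=\mathrm{LABEL}(\sigma,T)$. Block-wise method: for each axis $i$ choose odd integers $1=a^i_0<\dots<a^i_{m_i}=2n_i-1$; blocks are the boxes $\prod_i\{a^i_{k_i-1},\dots,a^i_{k_i}\}$. Step 1: $\lambda_B=\mathrm{LABEL}(\sigma,B)$ for each block. Step 2: with blocks ordered $B_1,\dots,B_K$, add offset $\sum_{k'<k}m_j(B_{k'})$ to each positive $j$-cell label of $\lambda_{B_k}$ ($j\in\{0,1,2\}$). Step 3: for $j\in\{1,2\}$, via union–find, unite the labels received in different blocks by any active $j$-cell lying in several blocks, and replace every positive $j$-cell label by its set representative. Step 4: for each 0-cell $t_0$ and each pair of distinct 1-cell labels occurring exactly once among the current labels of $\Gamma(t_0)$, merge the two labels if the corresponding 1-cells bound the same set of current 2-cell labels; if any merge took place at $t_0$, recompute the activity of $t_0$ and set its label to $0$ if inactive. The result is $\tau':T\to\mathbb{N}_0$. *)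

(* Defs.v *)
From Stdlib Require Import Relations.Relation_Operators.
From mathcomp Require Import all_boot.

Set Implicit Arguments.
Unset Strict Implicit.
Unset Printing Implicit Defensive.

Definition cell := (nat * nat * nat)%type.

Definition cx (c : cell) : nat := c.1.1.
Definition cy (c : cell) : nat := c.1.2.
Definition cz (c : cell) : nat := c.2.

Definition inG (n r : cell) : bool :=
  [&& 0 < cx r <= cx n, 0 < cy r <= cy n & 0 < cz r <= cz n].

Definition adist (a b : nat) : nat := (a - b) + (b - a).

Definition vadj (v w : cell) : Prop :=
  adist (cx v) (cx w) + adist (cy v) (cy w) + adist (cz v) (cz w) = 1.

Definition segment_label_map (n : cell) (sigma : cell -> nat) : Prop :=
  (forall r, inG n r -> 0 < sigma r) /\
  (forall r r', inG n r -> inG n r' -> sigma r = sigma r' ->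
     clos_refl_trans cell
       (fun a b => [/\ inG n a, inG n b, sigma a = sigma r, sigma b = sigma r & vadj a b])
       r r').

Definition inbox (lo hi c : cell) : bool :=
  [&& cx lo <= cx c <= cx hi, cy lo <= cy c <= cy hi & cz lo <= cz c <= cz hi].

Definition hiT (n : cell) : cell := (2 * cx n - 1, 2 * cy n - 1, 2 * cz n - 1).
Definition loT : cell := (1, 1, 1).
Definition inT (n c : cell) : bool := inbox loT (hiT n) c.

Definition cell_of_voxel (r : cell) : cell := (2 * cx r - 1, 2 * cy r - 1, 2 * cz r - 1).

(** a cell with exactly j odd coordinates is a j-cell *)
Definition dim (c : cell) : nat := odd (cx c) + odd (cy c) + odd (cz c).

(** Gamma(t): 6-neighbours of t in T that are (dim t + 1)-cells, i.e. the
    cells t -+ e_i for the axes i along which t has an even coordinate. *)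
Definition Gamma (n t : cell) : seq cell :=
  [seq s <- (if odd (cx t) then [::] else [:: (cx t - 1, cy t, cz t); (cx t + 1, cy t, cz t)])
         ++ (if odd (cy t) then [::] else [:: (cx t, cy t - 1, cz t); (cx t, cy t + 1, cz t)])
         ++ (if odd (cz t) then [::] else [:: (cx t, cy t, cz t - 1); (cx t, cy t, cz t + 1)])
  | inT n s].

Definition conn (n t1 t2 : cell) : Prop :=
  exists t, inT n t /\ t1 \in Gamma n t /\ t2 \in Gamma n t.

Definition triples (s1 s2 s3 : seq nat) : seq cell :=
  [seq (xy, z) | xy <- [seq (x, y) | x <- s1, y <- s2], z <- s3].
Definition cells_box (lo hi : cell) : seq cell :=
  triples (iota (cx lo) ((cx hi).+1 - cx lo))
          (iota (cy lo) ((cy hi).+1 - cy lo))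
          (iota (cz lo) ((cz hi).+1 - cz lo)).

(** theta(t): the positive labels occurring exactly once among the labels of
    Gamma(t) (as a sorted duplicate-free list, i.e. a canonical set). *)
Definition theta (n : cell) (lam : cell -> nat) (t : cell) : seq nat :=
  let ls := map lam (Gamma n t) in
  sort leq (undup [seq l <- ls | (0 < l) && (count_mem l ls == 1)]).

Definition active (n : cell) (lam : cell -> nat) (t : cell) : bool :=
  theta n lam t != [::].

Definition same_class (n lo hi : cell) (lam : cell -> nat) (t t' : cell) : Prop :=
  let P s := [&& inbox lo hi s, dim s == dim t, active n lam s & theta n lam s == theta n lam t] in
  P t /\ clos_refl_trans cell (fun a b => [/\ P a, P b & conn n a b]) t t'.

(** lam is a possible output of LABEL(sigma, B), B the cell box [lo, hi]
    (the numbering of classes being arbitrary). *)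
Definition label_valid (n : cell) (sigma : cell -> nat) (lo hi : cell) (lam : cell -> nat) : Prop :=
  (forall r, inbox lo hi (cell_of_voxel r) -> lam (cell_of_voxel r) = sigma r) /\
  (forall t, inbox lo hi t -> dim t < 3 -> ~~ active n lam t -> lam t = 0) /\
  (forall t, inbox lo hi t -> dim t < 3 -> active n lam t -> 0 < lam t) /\
  (forall t t', inbox lo hi t -> inbox lo hi t' -> dim t < 3 -> dim t' = dim t ->
     active n lam t -> active n lam t' -> (lam t = lam t' <-> same_class n lo hi lam t t')) /\
  (* the classes are numbered 1, ..., m_j(B) *)
  (forall t k, inbox lo hi t -> dim t < 3 -> active n lam t -> 0 < k <= lam t ->
     exists t', [/\ inbox lo hi t', dim t' = dim t, active n lam t' & lam t' = k]).

(** m_j(B): number of classes of j-cells = largest j-cell label in B. *)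
Definition mj (lam : cell -> nat) (lo hi : cell) (j : nat) : nat :=
  \max_(t <- cells_box lo hi | dim t == j) lam t.

Definition valid_axis (ni : nat) (a : seq nat) : Prop :=
  [/\ 2 <= size a, nth 0 a 0 = 1, last 0 a = 2 * ni - 1, sorted ltn a & all odd a].

Definition block_indices (A1 A2 A3 : seq nat) : seq cell :=
  triples (iota 1 (size A1).-1) (iota 1 (size A2).-1) (iota 1 (size A3).-1).
Definition blo (A1 A2 A3 : seq nat) (b : cell) : cell :=
  (nth 0 A1 (cx b).-1, nth 0 A2 (cy b).-1, nth 0 A3 (cz b).-1).
Definition bhi (A1 A2 A3 : seq nat) (b : cell) : cell :=
  (nth 0 A1 (cx b), nth 0 A2 (cy b), nth 0 A3 (cz b)).

Section Blockwise.
Variables (A1 A2 A3 : seq nat) (bl : seq cell) (lam : nat -> cell -> nat).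

Definition bk (k : nat) : cell := nth (0, 0, 0) bl k.
Definition in_blk (k : nat) (t : cell) : bool :=
  (k < size bl) && inbox (blo A1 A2 A3 (bk k)) (bhi A1 A2 A3 (bk k)) t.

Definition offset (k j : nat) : nat :=
  \sum_(0 <= k' < k) mj (lam k') (blo A1 A2 A3 (bk k')) (bhi A1 A2 A3 (bk k')) j.
Definition off (k : nat) (t : cell) : nat :=
  if 0 < lam k t then lam k t + offset k (dim t) else 0.

Definition unite (j : nat) (x y : nat) : Prop :=
  exists k k' t, in_blk k t /\ in_blk k' t /\ dim t = j /\ 0 < lam k t /\ 0 < lam k' t /\
                 x = off k t /\ y = off k' t.

Definition lab3 (rep : nat -> nat) (t : cell) : nat :=
  if [seq k <- iota 0 (size bl) | in_blk k t && (0 < lam k t)] is k :: _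
  then rep (off k t) else 0.
End Blockwise.

Definition is_rep (R : nat -> nat -> Prop) (rep : nat -> nat) : Prop :=
  (forall x y, rep x = rep y <-> clos_refl_sym_trans nat R x y) /\
  (forall x, clos_refl_sym_trans nat R x (rep x)).

(** Step 4 at the 0-cell t0: cur maps step-3 1-cell labels to current
    1-cell labels; L2 gives the (current) 2-cell labels; cur' is the new map. *)
Definition step4 (n : cell) (L1 L2 : cell -> nat) (cur : nat -> nat) (t0 : cell)
    (cur' : nat -> nat) : Prop :=
  let cl w := cur (L1 w) in
  let labs := map cl (Gamma n t0) in
  let once w := (0 < cl w) && (count_mem (cl w) labs == 1) in
  let bnd w := map L2 (Gamma n w) in
  let pair x y := exists w1 w2,
      w1 \in Gamma n t0 /\ w2 \in Gamma n t0 /\ once w1 /\ once w2 /\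
      cl w1 <> cl w2 /\ bnd w1 =i bnd w2 /\ x = cl w1 /\ y = cl w2 in
  exists rep, is_rep pair rep /\ cur' =1 (fun x => rep (cur x)).

(** tau' is a possible output of the block-wise method (all choices -- block
    order, per-block arbitrary numbering, union-find representatives, order
    of processing 0-cells -- being arbitrary).  The labels of 0-cells are
    left unconstrained. *)
Definition blockwise_out (n : cell) (sigma : cell -> nat) (A1 A2 A3 : seq nat)
    (tau' : cell -> nat) : Prop :=
  exists (bl : seq cell) (lam : nat -> cell -> nat) (rep1 rep2 : nat -> nat)
         (ord0 : seq cell) (cur : nat -> nat -> nat),
  perm_eq bl (block_indices A1 A2 A3) /\
      (forall k, k < size bl ->
         label_valid n sigma (blo A1 A2 A3 (bk bl k)) (bhi A1 A2 A3 (bk bl k)) (lam k)) /\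
      is_rep (unite A1 A2 A3 bl lam 1) rep1 /\
      is_rep (unite A1 A2 A3 bl lam 2) rep2 /\
      perm_eq ord0 [seq t <- cells_box loT (hiT n) | dim t == 0] /\
      cur 0 =1 id /\
      (forall i, i < size ord0 ->
         step4 n (lab3 A1 A2 A3 bl lam rep1) (lab3 A1 A2 A3 bl lam rep2)
               (cur i) (nth (0, 0, 0) ord0 i) (cur i.+1)) /\
      (forall u, inT n u -> dim u = 1 -> tau' u = cur (size ord0) (lab3 A1 A2 A3 bl lam rep1 u)) /\
          (forall s, inT n s -> dim s = 2 -> tau' s = lab3 A1 A2 A3 bl lam rep2 s) /\
          (forall r, inG n r -> tau' (cell_of_voxel r) = sigma r).

(* Main.v *)
Require Import Defs.
From Stdlib Require Import Relations.Relation_Operators.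
From mathcomp Require Import all_boot zify.
Set Implicit Arguments. Unset Strict Implicit. Unset Printing Implicit Defensive.


Lemma oddE' n : odd n -> exists k, n = 2 * k + 1.
Proof. move=> H; exists n./2; have := odd_double_half n; rewrite H -mul2n; lia. Qed.
Lemma evenE' n : ~~ odd n -> exists k, n = 2 * k.
Proof. move=> H; exists n./2; have := odd_double_half n; rewrite (negbTE H) -mul2n; lia. Qed.
Lemma odd2k1 k : odd (2 * k + 1). Proof. by rewrite addn1 /= mul2n odd_double. Qed.
Lemma odd2k k : odd (2 * k) = false. Proof. by rewrite mul2n odd_double. Qed.

Definition nbx (t s : cell) := ~~ odd (cx t) /\ (cx s = cx t - 1 \/ cx s = cx t + 1) /\ cy s = cy t /\ cz s = cz t.
Definition nby (t s : cell) := ~~ odd (cy t) /\ (cy s = cy t - 1 \/ cy s = cy t + 1) /\ cx s = cx t /\ cz s = cz t.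
Definition nbz (t s : cell) := ~~ odd (cz t) /\ (cz s = cz t - 1 \/ cz s = cz t + 1) /\ cx s = cx t /\ cy s = cy t.

Lemma GammaP n t s : s \in Gamma n t -> inT n s /\ (nbx t s \/ nby t s \/ nbz t s).
Proof.
rewrite /Gamma mem_filter => /andP[HT H]; split => //.
move: H; case: t => [[x y] z]; rewrite /nbx /nby /nbz /cx /cy /cz /=.
case Hx: (odd x); case Hy: (odd y); case Hz: (odd z) => /=; rewrite ?inE => H;
repeat (case/orP: H => [/eqP -> /=| H]); try by [];
try (by left; repeat split; auto); try (by right; left; repeat split; auto);
try (by right; right; repeat split; auto).
all: by move/eqP: H => -> /=; (try by left; repeat split; auto); (try by right; left; repeat split; auto);
 right; right; repeat split; auto.
Qed.

Lemma inTP n c : inT n c -> [/\ 1 <= cx c <= 2 * cx n - 1, 1 <= cy c <= 2 * cy n - 1 & 1 <= cz c <= 2 * cz n - 1].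
Proof. by rewrite /inT /inbox /= => /and3P[? ? ?]; split. Qed.

Lemma inboxP lo hi c : inbox lo hi c ->
  [/\ cx lo <= cx c <= cx hi, cy lo <= cy c <= cy hi & cz lo <= cz c <= cz hi].
Proof. by rewrite /inbox => /and3P[? ? ?]; split. Qed.

Lemma inboxI lo hi c : cx lo <= cx c <= cx hi -> cy lo <= cy c <= cy hi -> cz lo <= cz c <= cz hi ->
  inbox lo hi c.
Proof. by rewrite /inbox => -> -> ->. Qed.

Lemma oddm1 c : ~~ odd c -> 1 <= c - 1 -> odd (c - 1).
Proof. move=> /evenE' [k ->] H. have -> : 2 * k - 1 = 2 * (k - 1) + 1 by lia. exact: odd2k1. Qed.
Lemma oddp1 c : ~~ odd c -> odd (c + 1).
Proof. move=> /evenE' [k ->]. exact: odd2k1. Qed.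

Lemma Gamma_dim n t s : s \in Gamma n t -> dim s = (dim t).+1.
Proof.
move=> /GammaP [/inTP [Hx Hy Hz] [[Ho [Hc [E1 E2]]]|[[Ho [Hc [E1 E2]]]|[Ho [Hc [E1 E2]]]]]];
rewrite /dim; rewrite ?E1 ?E2 (negbTE Ho).
- case: Hc => Hc; rewrite Hc ?oddp1 ?oddm1 //; try lia. 
- case: Hc => Hc; rewrite Hc ?oddp1 ?oddm1 //; try lia. 
- case: Hc => Hc; rewrite Hc ?oddp1 ?oddm1 //; try lia. 
Qed.

Definition boxodd (lo hi : cell) : Prop :=
  [/\ odd (cx lo), odd (cy lo), odd (cz lo), odd (cx hi) & (odd (cy hi) /\ odd (cz hi))].

Lemma between_odd a c b : odd a -> odd b -> ~~ odd c -> a <= c <= b -> a <= c - 1 /\ c + 1 <= b.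
Proof.
move=> /oddE' [i ->] /oddE' [j ->] /evenE' [k ->] /andP[H1 H2]. lia.
Qed.

Lemma Gamma_box n lo hi t s : boxodd lo hi -> inbox lo hi t -> s \in Gamma n t -> inbox lo hi s.
Proof.
move=> [o1 o2 o3 o4 [o5 o6]] /inboxP [Bx By Bz].
move=> /GammaP [_ [[Ho [Hc [E1 E2]]]|[[Ho [Hc [E1 E2]]]|[Ho [Hc [E1 E2]]]]]]; apply: inboxI;
 rewrite ?E1 ?E2 //.
- have := between_odd o1 o4 Ho Bx. case: Hc => ->; lia.
- have := between_odd o2 o5 Ho By. case: Hc => ->; lia.
- have := between_odd o3 o6 Ho Bz. case: Hc => ->; lia.
Qed.

Definition vox_of (c : cell) : cell := ((cx c).+1./2, (cy c).+1./2, (cz c).+1./2).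

Lemma half_odd c : odd c -> 2 * (c.+1)./2 - 1 = c /\ c = 2 * (c.+1)./2 - 1.
Proof.
move=> /oddE' [k ->]. have -> : (2 * k + 1).+1 = (k.+1).*2 by rewrite -mul2n; lia.
rewrite doubleK; lia.
Qed.

Lemma dim3P c : dim c = 3 -> [/\ odd (cx c), odd (cy c) & odd (cz c)].
Proof. rewrite /dim; case: (odd (cx c)); case: (odd (cy c)); case: (odd (cz c)) => //. Qed.

Lemma dim3_voxel c : dim c = 3 -> c = cell_of_voxel (vox_of c).
Proof.
move=> /dim3P [h1 h2 h3]. case: c h1 h2 h3 => [[x y] z]; rewrite /cx /cy /cz /= => h1 h2 h3.
rewrite /cell_of_voxel /vox_of /cx /cy /cz /=.
by case: (half_odd h1) => ? <-; case: (half_odd h2) => ? <-; case: (half_odd h3) => ? <-.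
Qed.

Lemma vox_inG n c : dim c = 3 -> inT n c -> inG n (vox_of c).
Proof.
move=> /dim3P [h1 h2 h3] /inTP [X Y Z]. rewrite /inG /vox_of /cx /cy /cz /=.
move: h1 h2 h3 X Y Z; rewrite /cx /cy /cz.
move=> /oddE' [a ->] /oddE' [b ->] /oddE' [d ->] X Y Z.
have E : forall k, uphalf (2 * k + 1) = k.+1.
  by move=> k; rewrite uphalf_half odd2k1 mul2n addn1 -[(k.*2).+1]/(true + k.*2) half_bit_double add1n.
rewrite !E. apply/and3P; split; apply/andP; split; lia.
Qed.

Lemma mem_theta n L t x : (x \in theta n L t) =
  [&& x \in map L (Gamma n t), 0 < x & count_mem x (map L (Gamma n t)) == 1].
Proof. by rewrite /theta mem_sort mem_undup mem_filter andbC. Qed.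

Lemma theta_eq n L1 t1 L2 t2 : theta n L1 t1 =i theta n L2 t2 -> theta n L1 t1 = theta n L2 t2.
Proof.
move=> H; rewrite /theta; apply/perm_sortP.
- exact: leq_total. - exact: leq_trans. - exact: anti_leq.
apply: uniq_perm; rewrite ?undup_uniq // => x.
by have := H x; rewrite /theta !mem_sort.
Qed.

Lemma activeP n L t : reflect (exists x, x \in theta n L t) (active n L t).
Proof.
rewrite /active; case: (theta n L t) => [|a l] /=.
- by apply: ReflectF => -[x].
- by apply: ReflectT; exists a; rewrite inE eqxx.
Qed.

Definition subT (n lo hi : cell) := forall c, inbox lo hi c -> inT n c.

Lemma B3 n sigma lo hi lam tau c :
  subT n lo hi -> label_valid n sigma lo hi lam -> label_valid n sigma loT (hiT n) tau ->
  inbox lo hi c -> dim c = 3 -> lam c = tau c.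
Proof.
move=> Hs [L3 _] [T3 _] Hc Hd. rewrite (dim3_voxel Hd) in Hc *.
rewrite L3 // T3 //. exact: Hs.
Qed.

Lemma B2theta n sigma lo hi lam tau s :
  boxodd lo hi -> subT n lo hi -> label_valid n sigma lo hi lam -> label_valid n sigma loT (hiT n) tau ->
  inbox lo hi s -> dim s = 2 -> theta n lam s = theta n tau s.
Proof.
move=> Hb Hs Hl Ht Hc Hd. rewrite /theta.
have -> // : map lam (Gamma n s) = map tau (Gamma n s).
apply/eq_in_map => v Hv. apply: (B3 Hs Hl Ht); first exact: (Gamma_box Hb Hc Hv).
by rewrite (Gamma_dim Hv) Hd.
Qed.

Lemma crt_P (T : Type) (P : T -> bool) (R : T -> T -> Prop) x y :
  clos_refl_trans T (fun a b => [/\ P a, P b & R a b]) x y -> P x -> P y.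
Proof. elim => [a b [_ ? _]| a | a b c _ IH1 _ IH2] //; auto. Qed.

Lemma crt_mono (T : Type) (R R' : T -> T -> Prop) x y :
  (forall a b, R a b -> R' a b) -> clos_refl_trans T R x y -> clos_refl_trans T R' x y.
Proof. move=> H; elim => [a b ?| a | a b c _ IH1 _ IH2]; [apply: rt_step; auto | apply: rt_refl | apply: rt_trans IH1 IH2]. Qed.

Lemma class_transfer n lo hi lam tau t t' :
  subT n lo hi ->
  (forall a, inbox lo hi a -> dim a = dim t -> active n lam a -> theta n lam a = theta n lam t ->
      active n tau a /\ theta n tau a = theta n tau t) ->
  same_class n lo hi lam t t' -> same_class n loT (hiT n) tau t t'.
Proof.
move=> Hs F [Pt C].
have PP : forall a, [&& inbox lo hi a, dim a == dim t, active n lam a & theta n lam a == theta n lam t] ->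
  [&& inbox loT (hiT n) a, dim a == dim t, active n tau a & theta n tau a == theta n tau t].
  move=> a /and4P [H1 /eqP H2 H3 /eqP H4]. case: (F a H1 H2 H3 H4) => A1 A2.
  by have := Hs a H1; rewrite /inT => ->; rewrite H2 eqxx A1 A2 eqxx.
split; first exact: PP Pt.
apply: crt_mono C => a b [P1 P2 P3]; split => //; exact: PP.
Qed.

Lemma block_sound n sigma lo hi lam tau t t' :
  subT n lo hi -> label_valid n sigma lo hi lam -> label_valid n sigma loT (hiT n) tau ->
  (forall a, inbox lo hi a -> dim a = dim t -> active n lam a -> theta n lam a = theta n lam t ->
      active n tau a /\ theta n tau a = theta n tau t) ->
  inbox lo hi t -> inbox lo hi t' -> dim t < 3 -> dim t' = dim t ->
  active n lam t -> active n lam t' -> lam t = lam t' -> tau t = tau t'.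
Proof.
move=> Hs Hl Ht F Ht1 Ht2 Hd Hd' A1 A2 E.
have [_ [_ [_ [Li _]]]] := Hl. have [_ [_ [_ [Ti _]]]] := Ht.
have SC := (proj1 (Li t t' Ht1 Ht2 Hd Hd' A1 A2) E).
have SC' := class_transfer Hs F SC.
case: SC => [_ C].
have [P1 _] : active n tau t /\ theta n tau t = theta n tau t := F t Ht1 erefl A1 erefl.
have [Pt' _] := SC'.
apply/(Ti t t' (Hs _ Ht1) (Hs _ Ht2) Hd Hd' P1) => //.
case: SC' => _ C'.
by case/and4P: (crt_P C' Pt').
Qed.

Definition BH n sigma lo hi lam tau :=
  [/\ boxodd lo hi, subT n lo hi, label_valid n sigma lo hi lam & label_valid n sigma loT (hiT n) tau].

Lemma lv_zero n sigma lo hi L t : label_valid n sigma lo hi L -> inbox lo hi t -> dim t < 3 ->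
  (L t = 0 <-> ~~ active n L t).
Proof.
move=> [_ [H0 [Hp _]]] Hb Hd; split.
- move=> E; apply/negP => A; have := Hp t Hb Hd A; by rewrite E.
- exact: H0.
Qed.

Lemma B2_sound n sigma lo hi lam tau s s' : BH n sigma lo hi lam tau ->
  inbox lo hi s -> inbox lo hi s' -> dim s = 2 -> dim s' = 2 ->
  active n lam s -> active n lam s' -> lam s = lam s' -> tau s = tau s'.
Proof.
move=> [Hb Hs Hl Ht] H1 H2 D1 D2 A1 A2 E.
apply: (block_sound Hs Hl Ht _ H1 H2) => //; try by rewrite D1.
move=> a Ha Da Aa Ea; rewrite D1 in Da.
rewrite -(B2theta Hb Hs Hl Ht Ha Da) -(B2theta Hb Hs Hl Ht H1 D1); split => //.
by rewrite /active -(B2theta Hb Hs Hl Ht Ha Da).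
Qed.

Lemma B2_active n sigma lo hi lam tau s : BH n sigma lo hi lam tau ->
  inbox lo hi s -> dim s = 2 -> active n lam s = active n tau s.
Proof. by move=> [Hb Hs Hl Ht] H1 D1; rewrite /active (B2theta Hb Hs Hl Ht H1 D1). Qed.

Lemma B2_zero n sigma lo hi lam tau s : BH n sigma lo hi lam tau ->
  inbox lo hi s -> dim s = 2 -> (lam s = 0 <-> tau s = 0).
Proof.
move=> BHs H1 D1; have [Hb Hs Hl Ht] := BHs.
rewrite (lv_zero Hl H1) ?D1 // (lv_zero Ht (Hs _ H1)) ?D1 //.
by rewrite (B2_active BHs H1 D1).
Qed.

Lemma B2_complete n sigma lo hi lam tau w s s' : BH n sigma lo hi lam tau ->
  inbox lo hi w -> s \in Gamma n w -> s' \in Gamma n w -> dim w = 1 ->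
  active n tau s -> active n tau s' -> tau s = tau s' -> lam s = lam s'.
Proof.
move=> BHs Hw G1 G2 Dw A1 A2 E; have [Hb Hs Hl Ht] := BHs.
have H1 := Gamma_box Hb Hw G1; have H2 := Gamma_box Hb Hw G2.
have D1 : dim s = 2 by rewrite (Gamma_dim G1) Dw.
have D2 : dim s' = 2 by rewrite (Gamma_dim G2) Dw.
have [_ [_ [_ [Ti _]]]] := Ht; have [_ [_ [_ [Li _]]]] := Hl.
have [Ps C] :=
  (proj1 (Ti s s' (Hs _ H1) (Hs _ H2) (ltac:(by rewrite D1)) (ltac:(by rewrite D1 D2)) A1 A2) E).
case/and4P: (crt_P C Ps) => _ _ _ /eqP Th.
rewrite -!(B2theta Hb Hs Hl Ht) // in Th.
have A1' : active n lam s by rewrite (B2_active BHs H1 D1).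
have A2' : active n lam s' by rewrite (B2_active BHs H2 D2).
apply/(Li s s' H1 H2 (ltac:(by rewrite D1)) (ltac:(by rewrite D1 D2)) A1' A2').
have P1 : [&& inbox lo hi s, dim s == dim s, active n lam s & theta n lam s == theta n lam s].
  by rewrite H1 eqxx A1' eqxx.
have P2 : [&& inbox lo hi s', dim s' == dim s, active n lam s' & theta n lam s' == theta n lam s].
  by rewrite H2 D1 D2 eqxx A2' Th eqxx.
split => //; apply: rt_step; split => //.
exists w; split => //; exact: Hs.
Qed.

Lemma B1_eqv n sigma lo hi lam tau w s s' : BH n sigma lo hi lam tau ->
  inbox lo hi w -> dim w = 1 -> s \in Gamma n w -> s' \in Gamma n w ->
  (tau s = tau s' <-> lam s = lam s').
Proof.
move=> BHs Hw Dw G1 G2; have [Hb Hs Hl Ht] := BHs.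
have H1 := Gamma_box Hb Hw G1; have H2 := Gamma_box Hb Hw G2.
have D1 : dim s = 2 by rewrite (Gamma_dim G1) Dw.
have D2 : dim s' = 2 by rewrite (Gamma_dim G2) Dw.
have Z1 := B2_zero BHs H1 D1; have Z2 := B2_zero BHs H2 D2.
have Lz1 := lv_zero Hl H1 (ltac:(by rewrite D1)); have Lz2 := lv_zero Hl H2 (ltac:(by rewrite D2)).
have Tz1 := lv_zero Ht (Hs _ H1) (ltac:(by rewrite D1)); have Tz2 := lv_zero Ht (Hs _ H2) (ltac:(by rewrite D2)).
case A1: (active n tau s); case A2: (active n tau s').
- split; first exact: (B2_complete BHs Hw G1 G2).
  apply: (B2_sound BHs H1 H2 D1 D2); by rewrite (B2_active BHs) ?D1 ?D2.
- have ET : tau s' = 0 by apply/Tz2; rewrite A2.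
  have NT : tau s <> 0 by move/Tz1; rewrite A1.
  have EL : lam s' = 0 by apply/Z2.
  have NL : lam s <> 0 by move/Z1.
  rewrite ET EL; split => E; by [case: NT | case: NL].
- have ET : tau s = 0 by apply/Tz1; rewrite A1.
  have NT : tau s' <> 0 by move/Tz2; rewrite A2.
  have EL : lam s = 0 by apply/Z1.
  have NL : lam s' <> 0 by move/Z2.
  rewrite ET EL; split => E; by [case: NT | case: NL].
- have ET : tau s = 0 by apply/Tz1; rewrite A1.
  have ET' : tau s' = 0 by apply/Tz2; rewrite A2.
  have EL : lam s = 0 by apply/Z1. have EL' : lam s' = 0 by apply/Z2.
  by rewrite ET ET' EL EL'.
Qed.

Lemma B1_link n sigma lo hi lam tau w s : BH n sigma lo hi lam tau ->
  inbox lo hi w -> dim w = 1 -> s \in Gamma n w ->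
  (lam s \in theta n lam w) = (tau s \in theta n tau w).
Proof.
move=> BHs Hw Dw G1; have [Hb Hs Hl Ht] := BHs.
have H1 := Gamma_box Hb Hw G1.
have D1 : dim s = 2 by rewrite (Gamma_dim G1) Dw.
have Z1 := B2_zero BHs H1 D1.
rewrite !mem_theta !map_f //=.
have -> : (0 < lam s) = (0 < tau s).
  by case: (posnP (lam s)) => E; case: (posnP (tau s)) => E' //; [move: E'; move/Z1: E => -> | move: E; move/Z1: E' => ->].
congr (_ && (_ == 1)).
rewrite !count_map; apply: eq_in_count => s' G2 /=.
by apply/eqP/eqP => E; apply/(B1_eqv BHs Hw Dw G2 G1).
Qed.

Lemma mem_theta_ex n L w x : x \in theta n L w -> exists2 s, s \in Gamma n w & x = L s.
Proof. by rewrite mem_theta => /and3P [/mapP [s G ->] _ _]; exists s. Qed.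

Lemma theta_pos n L w x : x \in theta n L w -> 0 < x.
Proof. by rewrite mem_theta => /and3P []. Qed.

Lemma B1_active n sigma lo hi lam tau w : BH n sigma lo hi lam tau ->
  inbox lo hi w -> dim w = 1 -> active n lam w = active n tau w.
Proof.
move=> BHs Hw Dw; apply/activeP/activeP => [[x Hx]|[x Hx]].
- have [s G E] := mem_theta_ex Hx; subst x. exists (tau s); by rewrite -(B1_link BHs Hw Dw G).
- have [s G E] := mem_theta_ex Hx; subst x. exists (lam s); by rewrite (B1_link BHs Hw Dw G).
Qed.

Lemma B1_theta_sub n sigma lo hi lam tau w w' : BH n sigma lo hi lam tau ->
  inbox lo hi w -> dim w = 1 -> inbox lo hi w' -> dim w' = 1 ->
  theta n lam w = theta n lam w' -> {subset theta n tau w <= theta n tau w'}.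
Proof.
move=> BHs Hw Dw Hw' Dw' E y Hy; have [Hb Hs Hl Ht] := BHs.
have [s G Ey] := mem_theta_ex Hy; subst y.
have L1 : lam s \in theta n lam w' by rewrite -E (B1_link BHs Hw Dw G).
have [s' G' Es] := mem_theta_ex L1.
have L2 : lam s' \in theta n lam w' by rewrite -Es.
have H1 := Gamma_box Hb Hw G; have H2 := Gamma_box Hb Hw' G'.
have D1 : dim s = 2 by rewrite (Gamma_dim G) Dw.
have D2 : dim s' = 2 by rewrite (Gamma_dim G') Dw'.
have P1 := theta_pos L1; have P2 := theta_pos L2.
have A1 : active n lam s.
  case A: (active n lam s) => //. have := (proj2 (lv_zero Hl H1 (ltac:(by rewrite D1)))) (negbT A); lia.
have A2 : active n lam s'.
  case A: (active n lam s') => //. have := (proj2 (lv_zero Hl H2 (ltac:(by rewrite D2)))) (negbT A); lia.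
rewrite (B2_sound BHs H1 H2 D1 D2 A1 A2 Es).
by rewrite -(B1_link BHs Hw' Dw' G').
Qed.

Lemma B1_sound n sigma lo hi lam tau t t' : BH n sigma lo hi lam tau ->
  inbox lo hi t -> inbox lo hi t' -> dim t = 1 -> dim t' = 1 ->
  active n lam t -> active n lam t' -> lam t = lam t' -> tau t = tau t'.
Proof.
move=> BHs H1 H2 D1 D2 A1 A2 E; have [Hb Hs Hl Ht] := BHs.
apply: (block_sound Hs Hl Ht _ H1 H2) => //; try by rewrite ?D1 ?D2.
move=> a Ha Da Aa Ea; rewrite D1 in Da; split.
- by rewrite -(B1_active BHs Ha Da).
- apply: theta_eq => y; apply/idP/idP; apply: (B1_theta_sub BHs) => //.
Qed.

Lemma Bj_pos_active n sigma lo hi L t : label_valid n sigma lo hi L -> inbox lo hi t -> dim t < 3 ->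
  0 < L t -> active n L t.
Proof.
move=> Hl H1 D P; case A: (active n L t) => //.
have := (proj2 (lv_zero Hl H1 D)) (negbT A); lia.
Qed.

Lemma Bj_sound n sigma lo hi lam tau t t' : BH n sigma lo hi lam tau ->
  inbox lo hi t -> inbox lo hi t' -> (dim t = 1 \/ dim t = 2) -> dim t' = dim t ->
  0 < lam t -> 0 < lam t' -> lam t = lam t' -> tau t = tau t'.
Proof.
move=> BHs H1 H2 D D' P1 P2 E; have [Hb Hs Hl Ht] := BHs.
have D3 : dim t < 3 by case: D => ->.
have A1 := Bj_pos_active Hl H1 D3 P1.
have A2 := Bj_pos_active Hl H2 (ltac:(by rewrite D')) P2.
case: D => D.
- exact: (B1_sound BHs H1 H2 D (ltac:(by rewrite D' D))).
- exact: (B2_sound BHs H1 H2 D (ltac:(by rewrite D' D))).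
Qed.

Lemma Bj_zero n sigma lo hi lam tau t : BH n sigma lo hi lam tau ->
  inbox lo hi t -> (dim t = 1 \/ dim t = 2) -> (lam t = 0 <-> tau t = 0).
Proof.
move=> BHs H1 D; have [Hb Hs Hl Ht] := BHs.
have D3 : dim t < 3 by case: D => ->.
case: D => D; last exact: (B2_zero BHs H1 D).
rewrite (lv_zero Hl H1 D3) (lv_zero Ht (Hs _ H1) D3).
by rewrite (B1_active BHs H1 D).
Qed.

Lemma nth_mono (a : seq nat) i j : sorted ltn a -> i <= j -> j < size a -> nth 0 a i <= nth 0 a j.
Proof.
move=> S Hij Hj; case: (ltngtP i j) Hij => // [Hlt _ | -> //].
apply: ltnW. have H := sorted_ltn_nth ltn_trans 0 S. apply: H => //; rewrite inE; lia.
Qed.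

Lemma VA_block ni a i : valid_axis ni a -> 0 < i < size a ->
  [/\ odd (nth 0 a i.-1), odd (nth 0 a i), 1 <= nth 0 a i.-1 & nth 0 a i <= 2 * ni - 1].
Proof.
move=> [Hs H0 Hl S Ho] /andP [Hi1 Hi2].
move/(all_nthP 0): Ho => Ao.
split; [apply: Ao; lia | apply: Ao; lia | |].
- rewrite -H0; apply: nth_mono => //; lia.
- rewrite -Hl -nth_last; apply: nth_mono => //; lia.
Qed.

Lemma VA_cover ni a c : valid_axis ni a -> 1 <= c <= 2 * ni - 1 ->
  exists i, [/\ 0 < i < size a, nth 0 a i.-1 <= c & c <= nth 0 a i].
Proof.
move=> [Hs H0 Hl S Ho] /andP [Hc1 Hc2].
have Ex : exists i, (0 < i < size a) && (c <= nth 0 a i).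
  exists (size a).-1; rewrite nth_last Hl; apply/andP; split => //; lia.
case: (ex_minnP Ex) => i /andP [Hi Hci] Hmin.
exists i; split => //.
case: (posnP i.-1) => E.
- rewrite E H0 //.
- have : ~~ ((0 < i.-1 < size a) && (c <= nth 0 a i.-1)).
    apply/negP => /Hmin; lia.
  rewrite negb_and => /orP [|]; first by (move/negP => F; exfalso; apply: F; lia).
  rewrite -ltnNge; lia.
Qed.

Lemma mem_triples (s1 s2 s3 : seq nat) x y z :
  (((x, y), z) \in triples s1 s2 s3) = [&& x \in s1, y \in s2 & z \in s3].
Proof.
apply/allpairsP/and3P.
- move=> [[xy z'] [/= H1 Hz [E1 E2]]]; subst.
  move/allpairsP: H1 => [[x' y'] [/= Hx Hy [-> ->]]]. by split.
- move=> [Hx Hy Hz]; exists ((x, y), z); split => //=. apply/allpairsP; by exists (x, y).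
Qed.
Lemma mem_cells_box lo hi t : (t \in cells_box lo hi) = inbox lo hi t.
Proof.
case: t => [[x y] z]; rewrite /cells_box mem_triples !mem_iota /inbox /cx /cy /cz /=.
case: lo => [[a b] c]; case: hi => [[d e] f] /=.
have E : forall p q r, (p <= r < p + (q.+1 - p)) = (p <= r <= q).
  move=> p q r; apply/andP/andP => [[? ?]|[? ?]]; split => //; lia.
by rewrite !E.
Qed.


Lemma iota_rng x s : 1 <= x < 1 + s.-1 -> 0 < x < s.
Proof. case: s => [|s] /=; lia. Qed.

Lemma blk_index n1 n2 n3 A1 A2 A3 b : valid_axis n1 A1 -> valid_axis n2 A2 -> valid_axis n3 A3 ->
  b \in block_indices A1 A2 A3 ->
  boxodd (blo A1 A2 A3 b) (bhi A1 A2 A3 b) /\ subT (n1, n2, n3) (blo A1 A2 A3 b) (bhi A1 A2 A3 b).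
Proof.
move=> V1 V2 V3; case: b => [[x y] z]; rewrite /block_indices mem_triples !mem_iota.
move=> /and3P [Hx Hy Hz].
have [o1 o1' l1 h1] := VA_block V1 (iota_rng Hx).
have [o2 o2' l2 h2] := VA_block V2 (iota_rng Hy).
have [o3 o3' l3 h3] := VA_block V3 (iota_rng Hz).
rewrite /blo /bhi /cx /cy /cz /=; split; first by split.
move=> [[a b] c] /inboxP; rewrite /cx /cy /cz /= => [[/andP [? ?] /andP [? ?] /andP [? ?]]].
rewrite /inT /inbox /hiT /loT /cx /cy /cz /=. apply/and3P; split; apply/andP; split; lia.
Qed.

Lemma blk_BH n1 n2 n3 sigma A1 A2 A3 bl (lam : nat -> cell -> nat) tau k :
  valid_axis n1 A1 -> valid_axis n2 A2 -> valid_axis n3 A3 ->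
  perm_eq bl (block_indices A1 A2 A3) -> k < size bl ->
  label_valid (n1, n2, n3) sigma (blo A1 A2 A3 (bk bl k)) (bhi A1 A2 A3 (bk bl k)) (lam k) ->
  label_valid (n1, n2, n3) sigma loT (hiT (n1, n2, n3)) tau ->
  BH (n1, n2, n3) sigma (blo A1 A2 A3 (bk bl k)) (bhi A1 A2 A3 (bk bl k)) (lam k) tau.
Proof.
move=> V1 V2 V3 Hp Hk Hl Ht.
have Hb : bk bl k \in block_indices A1 A2 A3 by rewrite -(perm_mem Hp) /bk mem_nth.
have [B S] := blk_index V1 V2 V3 Hb. by split.
Qed.

Lemma blk_cover n1 n2 n3 A1 A2 A3 bl t :
  valid_axis n1 A1 -> valid_axis n2 A2 -> valid_axis n3 A3 ->
  perm_eq bl (block_indices A1 A2 A3) -> inT (n1, n2, n3) t ->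
  exists k, in_blk A1 A2 A3 bl k t.
Proof.
move=> V1 V2 V3 Hp /inTP; case: t => [[x y] z]; rewrite /cx /cy /cz /= => [[Hx Hy Hz]].
have [i1 [Hi1 L1 U1]] := VA_cover V1 Hx.
have [i2 [Hi2 L2 U2]] := VA_cover V2 Hy.
have [i3 [Hi3 L3 U3]] := VA_cover V3 Hz.
have Hb : ((i1, i2), i3) \in bl.
  rewrite (perm_mem Hp) /block_indices mem_triples !mem_iota.
  case: (A1) Hi1 => [|? s1] /=; case: (A2) Hi2 => [|? s2] /=; case: (A3) Hi3 => [|? s3] /=;
  rewrite ?add1n; lia.
exists (index ((i1, i2), i3) bl).
rewrite /in_blk index_mem Hb /bk nth_index //= /inbox /blo /bhi /cx /cy /cz /=.
by rewrite L1 U1 L2 U2 L3 U3.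
Qed.

Definition Ctx n1 n2 n3 sigma A1 A2 A3 bl (lam : nat -> cell -> nat) tau :=
  [/\ valid_axis n1 A1, valid_axis n2 A2, valid_axis n3 A3, perm_eq bl (block_indices A1 A2 A3)
   & (forall k, k < size bl -> label_valid (n1, n2, n3) sigma (blo A1 A2 A3 (bk bl k)) (bhi A1 A2 A3 (bk bl k)) (lam k))
     /\ label_valid (n1, n2, n3) sigma loT (hiT (n1, n2, n3)) tau].

Lemma Ctx_BH n1 n2 n3 sigma A1 A2 A3 bl lam tau k t :
  Ctx n1 n2 n3 sigma A1 A2 A3 bl lam tau -> in_blk A1 A2 A3 bl k t ->
  BH (n1, n2, n3) sigma (blo A1 A2 A3 (bk bl k)) (bhi A1 A2 A3 (bk bl k)) (lam k) tau /\
  inbox (blo A1 A2 A3 (bk bl k)) (bhi A1 A2 A3 (bk bl k)) t.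
Proof.
move=> [V1 V2 V3 Hp [Hl Ht]] /andP [Hk Hb]; split => //.
exact: blk_BH V1 V2 V3 Hp Hk (Hl k Hk) Ht.
Qed.

Lemma lam_le_mj A1 A2 A3 bl (lam : nat -> cell -> nat) k t : in_blk A1 A2 A3 bl k t ->
  lam k t <= mj (lam k) (blo A1 A2 A3 (bk bl k)) (bhi A1 A2 A3 (bk bl k)) (dim t).
Proof.
move=> /andP [_ Hb]; rewrite /mj; apply: (leq_bigmax_seq (P := fun s => dim s == dim t)) => //.
by rewrite mem_cells_box.
Qed.

Lemma offset_S A1 A2 A3 bl lam k j :
  offset A1 A2 A3 bl lam k.+1 j = offset A1 A2 A3 bl lam k j + mj (lam k) (blo A1 A2 A3 (bk bl k)) (bhi A1 A2 A3 (bk bl k)) j.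
Proof. by rewrite /offset big_nat_recr. Qed.

Lemma offset_mono A1 A2 A3 bl lam k k' j : k <= k' ->
  offset A1 A2 A3 bl lam k j <= offset A1 A2 A3 bl lam k' j.
Proof.
elim: k' => [|k' IH]; first by rewrite leqn0 => /eqP ->.
rewrite leq_eqVlt => /orP [/eqP -> //| H]. rewrite offset_S. apply: leq_trans (IH H) _. exact: leq_addr.
Qed.

Lemma off_inj A1 A2 A3 bl lam k t k' t' :
  in_blk A1 A2 A3 bl k t -> in_blk A1 A2 A3 bl k' t' -> dim t = dim t' ->
  0 < lam k t -> 0 < lam k' t' -> off A1 A2 A3 bl lam k t = off A1 A2 A3 bl lam k' t' ->
  k = k' /\ lam k t = lam k' t'.
Proof.
move=> B1 B2 D P1 P2; rewrite /off P1 P2 -D.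
have M1 := lam_le_mj lam B1; have M2 := lam_le_mj lam B2; rewrite -D in M2.
case: (ltngtP k k') => [Hlt|Hlt|<-] E.
- have O := offset_mono A1 A2 A3 bl lam (dim t) Hlt. rewrite offset_S in O. lia.
- have O := offset_mono A1 A2 A3 bl lam (dim t) Hlt. rewrite offset_S in O. lia.
- split => //; lia.
Qed.

Lemma off_pos A1 A2 A3 bl (lam : nat -> cell -> nat) k t : 0 < lam k t -> 0 < off A1 A2 A3 bl lam k t.
Proof. by move=> P; rewrite /off P; lia. Qed.

Lemma lab3P A1 A2 A3 bl (lam : nat -> cell -> nat) rep t :
  (exists k, [/\ lab3 A1 A2 A3 bl lam rep t = rep (off A1 A2 A3 bl lam k t), in_blk A1 A2 A3 bl k t & 0 < lam k t])
  \/ (lab3 A1 A2 A3 bl lam rep t = 0 /\ forall k, in_blk A1 A2 A3 bl k t -> lam k t = 0).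
Proof.
rewrite /lab3.
have Hm : forall k, (k \in [seq k <- iota 0 (size bl) | in_blk A1 A2 A3 bl k t && (0 < lam k t)]) =
    (in_blk A1 A2 A3 bl k t && (0 < lam k t)).
  move=> k; rewrite mem_filter mem_iota add0n /=. case B: (in_blk A1 A2 A3 bl k t) => //=.
  by case/andP: B => ->; rewrite andbT.
case E: [seq k <- iota 0 (size bl) | in_blk A1 A2 A3 bl k t && (0 < lam k t)] => [|k l].
- right; split => // k B. have := Hm k; rewrite E B /= in_nil. case: (lam k t) => //.
- left; exists k. have := Hm k; rewrite E inE eqxx /= => /esym /andP [B P]. by split.
Qed.

Definition realized A1 A2 A3 bl (lam : nat -> cell -> nat) j x :=
  exists k t, [/\ in_blk A1 A2 A3 bl k t, dim t = j, 0 < lam k t & off A1 A2 A3 bl lam k t = x].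

Definition Rel A1 A2 A3 bl (lam : nat -> cell -> nat) (tau : cell -> nat) j x y :=
  forall k t k' t', in_blk A1 A2 A3 bl k t -> dim t = j -> 0 < lam k t -> off A1 A2 A3 bl lam k t = x ->
    in_blk A1 A2 A3 bl k' t' -> dim t' = j -> 0 < lam k' t' -> off A1 A2 A3 bl lam k' t' = y ->
    tau t = tau t'.

Lemma rel_refl n1 n2 n3 sigma A1 A2 A3 bl lam tau j x :
  Ctx n1 n2 n3 sigma A1 A2 A3 bl lam tau -> (j = 1 \/ j = 2) -> Rel A1 A2 A3 bl lam tau j x x.
Proof.
move=> C Hj k t k' t' B1 D1 P1 E1 B2 D2 P2 E2.
have [Ek El] := off_inj B1 B2 (ltac:(by rewrite D1 D2)) P1 P2 (etrans E1 (esym E2)).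
subst k'. have [BHs Hb1] := Ctx_BH C B1. have [_ Hb2] := Ctx_BH C B2.
exact: (Bj_sound BHs Hb1 Hb2 (ltac:(by rewrite D1)) (etrans D2 (esym D1)) P1 P2 El).
Qed.

Definition QQ A1 A2 A3 bl lam tau j x y :=
  Rel A1 A2 A3 bl lam tau j x y /\
  (x = y \/ (realized A1 A2 A3 bl lam j x /\ realized A1 A2 A3 bl lam j y)).

Lemma QQ_clos n1 n2 n3 sigma A1 A2 A3 bl lam tau j x y :
  Ctx n1 n2 n3 sigma A1 A2 A3 bl lam tau -> (j = 1 \/ j = 2) ->
  clos_refl_sym_trans nat (unite A1 A2 A3 bl lam j) x y -> QQ A1 A2 A3 bl lam tau j x y.
Proof.
move=> C Hj; elim => [a b U | a | a b _ [IH1 IH2] | a b c _ [R1 O1] _ [R2 O2]].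
- case: U => k [k' [t [B1 [B2 [Dt [P1 [P2 [Ea Eb]]]]]]]].
  split; last by right; split; [exists k, t; split | exists k', t; split].
  move=> k1 t1 k2 t2 C1 D1 Q1 E1 C2 D2 Q2 E2.
  have X1 := rel_refl C Hj C1 D1 Q1 E1 B1 Dt P1 (esym Ea).
  have X2 := rel_refl C Hj C2 D2 Q2 E2 B2 Dt P2 (esym Eb).
  by rewrite X1 X2.
- split; [exact: (rel_refl C Hj) | by left].
- split; last by case: IH2 => [->|[? ?]]; [left | right].
  move=> k t k' t' B1 D1 P1 E1 B2 D2 P2 E2; symmetry; exact: (IH1 k' t' k t).
- split; last first.
    case: O1 => [E|[Ra Rb]]; first by subst b.
    case: O2 => [E|[_ Rc]]; first by subst c; right.
    by right.
  move=> k t k' t' B1 D1 P1 E1 B2 D2 P2 E2.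
  case: O1 => [E|[_ [kb [tb [Bb Db Pb Eb]]]]].
  + subst b; exact: (R2 k t k' t').
  + rewrite (R1 k t kb tb) //; exact: (R2 kb tb k' t').
Qed.

Lemma rep_pos n1 n2 n3 sigma A1 A2 A3 bl lam tau j rep x :
  Ctx n1 n2 n3 sigma A1 A2 A3 bl lam tau -> (j = 1 \/ j = 2) ->
  is_rep (unite A1 A2 A3 bl lam j) rep -> realized A1 A2 A3 bl lam j x -> 0 < rep x.
Proof.
move=> C Hj [_ R2] Rx.
have [_ O] := QQ_clos C Hj (R2 x).
have RP : forall y, realized A1 A2 A3 bl lam j y -> 0 < y.
  by move=> y [k [t [_ _ P <-]]]; exact: off_pos.
case: O => [<-|[_ ?]]; exact: RP.
Qed.

Lemma lab3_sound n1 n2 n3 sigma A1 A2 A3 bl lam tau j rep u v :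
  Ctx n1 n2 n3 sigma A1 A2 A3 bl lam tau -> (j = 1 \/ j = 2) ->
  is_rep (unite A1 A2 A3 bl lam j) rep ->
  inT (n1, n2, n3) u -> inT (n1, n2, n3) v -> dim u = j -> dim v = j ->
  lab3 A1 A2 A3 bl lam rep u = lab3 A1 A2 A3 bl lam rep v -> tau u = tau v.
Proof.
move=> C Hj R Tu Tv Du Dv.
have C' := C; case: C' => V1 V2 V3 Hp _.
have Z : forall w, inT (n1, n2, n3) w -> dim w = j -> (forall k, in_blk A1 A2 A3 bl k w -> lam k w = 0) -> tau w = 0.
  move=> w Tw Dw H. have [k B] := blk_cover V1 V2 V3 Hp Tw.
  have [BHs Hb] := Ctx_BH C B. apply/(Bj_zero BHs Hb); [by rewrite Dw | exact: H].
case: (lab3P A1 A2 A3 bl lam rep u) => [[k [Eu Bu Pu]]|[Eu Zu]];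
case: (lab3P A1 A2 A3 bl lam rep v) => [[k' [Ev Bv Pv]]|[Ev Zv]]; rewrite Eu Ev.
- move/(proj1 R) => Cl. have [Rl _] := QQ_clos C Hj Cl. exact: (Rl k u k' v).
- move=> E. have := rep_pos C Hj R (x := off A1 A2 A3 bl lam k u) (ltac:(by exists k, u; split)).
  by rewrite E.
- move=> E. have := rep_pos C Hj R (x := off A1 A2 A3 bl lam k' v) (ltac:(by exists k', v; split)).
  by rewrite -E.
- by rewrite (Z u) // (Z v).
Qed.

Lemma lab3_pos_blk A1 A2 A3 bl lam rep t : 0 < lab3 A1 A2 A3 bl lam rep t ->
  exists k, in_blk A1 A2 A3 bl k t /\ 0 < lam k t.
Proof.
case: (lab3P A1 A2 A3 bl lam rep t) => [[k [_ B P]]|[-> _]] //; by exists k.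
Qed.

Lemma active_lab3_pos n1 n2 n3 sigma A1 A2 A3 bl lam tau j rep t :
  Ctx n1 n2 n3 sigma A1 A2 A3 bl lam tau -> (j = 1 \/ j = 2) ->
  is_rep (unite A1 A2 A3 bl lam j) rep ->
  inT (n1, n2, n3) t -> dim t = j -> active (n1, n2, n3) tau t -> 0 < lab3 A1 A2 A3 bl lam rep t.
Proof.
move=> C Hj R Tt Dt A.
have C' := C; case: C' => V1 V2 V3 Hp [_ Ht].
have [k B] := blk_cover V1 V2 V3 Hp Tt.
have [BHs Hb] := Ctx_BH C B.
have Tpos : 0 < tau t.
  have [_ [_ [Hpos _]]] := Ht. apply: Hpos => //. by rewrite Dt; case: Hj => ->.
case: (lab3P A1 A2 A3 bl lam rep t) => [[k' [E B' P']]|[_ Zt]].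
- rewrite E; apply: (rep_pos C Hj R); by exists k', t; split.
- have := (proj1 (Bj_zero BHs Hb (ltac:(by rewrite Dt))) (Zt k B)). lia.
Qed.

Lemma pos_active_blk n1 n2 n3 sigma A1 A2 A3 bl lam tau k t :
  Ctx n1 n2 n3 sigma A1 A2 A3 bl lam tau -> in_blk A1 A2 A3 bl k t -> dim t = 1 ->
  0 < lam k t -> active (n1, n2, n3) tau t.
Proof.
move=> C B Dt P. have [BHs Hb] := Ctx_BH C B. have [_ _ Hl _] := BHs.
rewrite -(B1_active BHs Hb Dt). apply: (Bj_pos_active Hl Hb) => //; by rewrite Dt.
Qed.


Lemma inT_of n x y z : 1 <= x <= 2 * cx n - 1 -> 1 <= y <= 2 * cy n - 1 -> 1 <= z <= 2 * cz n - 1 ->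
  inT n (x, y, z).
Proof. by rewrite /inT /inbox /cx /cy /cz /= => -> -> ->. Qed.

Lemma odd2k2 k : odd (2 * k + 2) = false.
Proof. have -> : 2 * k + 2 = 2 * k.+1 by lia. by rewrite odd2k. Qed.

Lemma filterT n (s : seq cell) : all (inT n) s -> [seq c <- s | inT n c] = s.
Proof. by move/all_filterP. Qed.

Lemma Gx n a b c : inT n (2*a+1, 2*b+2, 2*c+2) ->
  Gamma n (2*a+1, 2*b+2, 2*c+2) = [:: (2*a+1, 2*b+1, 2*c+2); (2*a+1, 2*b+3, 2*c+2);
                                      (2*a+1, 2*b+2, 2*c+1); (2*a+1, 2*b+2, 2*c+3)] /\
  Gamma n (2*a+1, 2*b+1, 2*c+2) = [:: (2*a+1, 2*b+1, 2*c+1); (2*a+1, 2*b+1, 2*c+3)] /\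
  Gamma n (2*a+1, 2*b+3, 2*c+2) = [:: (2*a+1, 2*b+3, 2*c+1); (2*a+1, 2*b+3, 2*c+3)] /\
  Gamma n (2*a+1, 2*b+2, 2*c+1) = [:: (2*a+1, 2*b+1, 2*c+1); (2*a+1, 2*b+3, 2*c+1)] /\
  Gamma n (2*a+1, 2*b+2, 2*c+3) = [:: (2*a+1, 2*b+1, 2*c+3); (2*a+1, 2*b+3, 2*c+3)].
Proof.
move=> /inTP [X Y Z]; move: X Y Z; rewrite /cx /cy /cz /= => X Y Z.
have o3 : forall k, odd (2 * k + 3) by move=> k; rewrite (_ : 2 * k + 3 = 2 * k.+1 + 1); [exact: odd2k1 | lia].
have E1 : forall k, 2 * k + 2 - 1 = 2 * k + 1 by move=> k; lia.
have E2 : forall k, 2 * k + 2 + 1 = 2 * k + 3 by move=> k; lia.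
have E3 : forall k, 2 * k + 1 - 1 = 2 * k by move=> k; lia.
rewrite /Gamma /cx /cy /cz /= !odd2k1 !odd2k2 !o3 /= !E1 !E2.
rewrite ?inT_of /=; rewrite ?/cx ?/cy ?/cz; try lia; by [].
Qed.

Lemma Gy n a b c : inT n (2*a+2, 2*b+1, 2*c+2) ->
  Gamma n (2*a+2, 2*b+1, 2*c+2) = [:: (2*a+1, 2*b+1, 2*c+2); (2*a+3, 2*b+1, 2*c+2);
                                      (2*a+2, 2*b+1, 2*c+1); (2*a+2, 2*b+1, 2*c+3)] /\
  Gamma n (2*a+1, 2*b+1, 2*c+2) = [:: (2*a+1, 2*b+1, 2*c+1); (2*a+1, 2*b+1, 2*c+3)] /\
  Gamma n (2*a+3, 2*b+1, 2*c+2) = [:: (2*a+3, 2*b+1, 2*c+1); (2*a+3, 2*b+1, 2*c+3)] /\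
  Gamma n (2*a+2, 2*b+1, 2*c+1) = [:: (2*a+1, 2*b+1, 2*c+1); (2*a+3, 2*b+1, 2*c+1)] /\
  Gamma n (2*a+2, 2*b+1, 2*c+3) = [:: (2*a+1, 2*b+1, 2*c+3); (2*a+3, 2*b+1, 2*c+3)].
Proof.
move=> /inTP [X Y Z]; move: X Y Z; rewrite /cx /cy /cz /= => X Y Z.
have o3 : forall k, odd (2 * k + 3) by move=> k; rewrite (_ : 2 * k + 3 = 2 * k.+1 + 1); [exact: odd2k1 | lia].
have E1 : forall k, 2 * k + 2 - 1 = 2 * k + 1 by move=> k; lia.
have E2 : forall k, 2 * k + 2 + 1 = 2 * k + 3 by move=> k; lia.
have E3 : forall k, 2 * k + 1 - 1 = 2 * k by move=> k; lia.
rewrite /Gamma /cx /cy /cz /= !odd2k1 !odd2k2 !o3 /= !E1 !E2.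
rewrite ?inT_of /=; rewrite ?/cx ?/cy ?/cz; try lia; by [].
Qed.

Lemma Gz n a b c : inT n (2*a+2, 2*b+2, 2*c+1) ->
  Gamma n (2*a+2, 2*b+2, 2*c+1) = [:: (2*a+1, 2*b+2, 2*c+1); (2*a+3, 2*b+2, 2*c+1);
                                      (2*a+2, 2*b+1, 2*c+1); (2*a+2, 2*b+3, 2*c+1)] /\
  Gamma n (2*a+1, 2*b+2, 2*c+1) = [:: (2*a+1, 2*b+1, 2*c+1); (2*a+1, 2*b+3, 2*c+1)] /\
  Gamma n (2*a+3, 2*b+2, 2*c+1) = [:: (2*a+3, 2*b+1, 2*c+1); (2*a+3, 2*b+3, 2*c+1)] /\
  Gamma n (2*a+2, 2*b+1, 2*c+1) = [:: (2*a+1, 2*b+1, 2*c+1); (2*a+3, 2*b+1, 2*c+1)] /\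
  Gamma n (2*a+2, 2*b+3, 2*c+1) = [:: (2*a+1, 2*b+3, 2*c+1); (2*a+3, 2*b+3, 2*c+1)].
Proof.
move=> /inTP [X Y Z]; move: X Y Z; rewrite /cx /cy /cz /= => X Y Z.
have o3 : forall k, odd (2 * k + 3) by move=> k; rewrite (_ : 2 * k + 3 = 2 * k.+1 + 1); [exact: odd2k1 | lia].
have E1 : forall k, 2 * k + 2 - 1 = 2 * k + 1 by move=> k; lia.
have E2 : forall k, 2 * k + 2 + 1 = 2 * k + 3 by move=> k; lia.
have E3 : forall k, 2 * k + 1 - 1 = 2 * k by move=> k; lia.
rewrite /Gamma /cx /cy /cz /= !odd2k1 !odd2k2 !o3 /= !E1 !E2.
rewrite ?inT_of /=; rewrite ?/cx ?/cy ?/cz; try lia; by [].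
Qed.


Lemma even_ge2 c : ~~ odd c -> 1 <= c -> exists k, c = 2 * k + 2.
Proof. move=> /evenE' [k ->] H; exists k.-1; lia. Qed.

Lemma edge_struct n w : inT n w -> dim w = 1 ->
  exists f1 f2 f3 f4 v1 v2 v3 v4,
  [/\ Gamma n w = [:: f1; f2; f3; f4], Gamma n f1 = [:: v1; v2], Gamma n f2 = [:: v3; v4],
      Gamma n f3 = [:: v1; v3] & Gamma n f4 = [:: v2; v4]].
Proof.
move=> Tw; have := Tw; move/inTP => [X Y Z].
case: w Tw X Y Z => [[x y] z]; rewrite /dim /cx /cy /cz /= => Tw X Y Z.
case Ox: (odd x); case Oy: (odd y); case Oz: (odd z) => //= _.
- move/negbT: Oy => /even_ge2 /(_ (ltac:(lia))) [b Eb]; move/negbT: Oz => /even_ge2 /(_ (ltac:(lia))) [c Ec].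
  move/oddE': Ox => [a Ea]; subst.
  have [G0 [G1 [G2 [G3 G4]]]] := Gx Tw.
  by do 8 eexists; split; eassumption.
- move/negbT: Ox => /even_ge2 /(_ (ltac:(lia))) [a Ea]; move/negbT: Oz => /even_ge2 /(_ (ltac:(lia))) [c Ec].
  move/oddE': Oy => [b Eb]; subst.
  have [G0 [G1 [G2 [G3 G4]]]] := Gy Tw.
  by do 8 eexists; split; eassumption.
- move/negbT: Ox => /even_ge2 /(_ (ltac:(lia))) [a Ea]; move/negbT: Oy => /even_ge2 /(_ (ltac:(lia))) [b Eb].
  move/oddE': Oz => [c Ec]; subst.
  have [G0 [G1 [G2 [G3 G4]]]] := Gz Tw.
  by do 8 eexists; split; eassumption.
Qed.

Definition U (x a b c : nat) := x <> a /\ x <> b /\ x <> c.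
Definition S (p q r s : nat) := p <> q /\ r <> s /\ ((p = r /\ q = s) \/ (p = s /\ q = r)).
Lemma pairs (A B C D : nat) :
  let P1 := S A B C D \/ S A B A C \/ S A B B D in
  let P2 := S C D A B \/ S C D A C \/ S C D B D in
  let P3 := S A C A B \/ S A C C D \/ S A C B D in
  let P4 := S B D A B \/ S B D C D \/ S B D A C in
  (P1 \/ P2 \/ P3 \/ P4) -> (A <> B -> P1) /\ (C <> D -> P2) /\ (A <> C -> P3) /\ (B <> D -> P4).
Proof. rewrite /S /=. intuition congruence. Qed.

Lemma Ssym p q r s : S p q r s -> S r s p q.
Proof. rewrite /S; intuition congruence. Qed.

Lemma comb (A B C D l1 l2 l3 l4 : nat) :
  (l1 = 0 <-> A = B) -> (l2 = 0 <-> C = D) -> (l3 = 0 <-> A = C) -> (l4 = 0 <-> B = D) ->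
  (l1 = l2 <-> S A B C D \/ (A = B /\ C = D)) ->
  (l1 = l3 <-> S A B A C \/ (A = B /\ A = C)) ->
  (l1 = l4 <-> S A B B D \/ (A = B /\ B = D)) ->
  (l2 = l3 <-> S C D A C \/ (C = D /\ A = C)) ->
  (l2 = l4 <-> S C D B D \/ (C = D /\ B = D)) ->
  (l3 = l4 <-> S A C B D \/ (A = C /\ B = D)) ->
  (l1 <> 0 /\ U l1 l2 l3 l4) \/ (l2 <> 0 /\ U l2 l1 l3 l4) \/ (l3 <> 0 /\ U l3 l1 l2 l4) \/ (l4 <> 0 /\ U l4 l1 l2 l3) ->
  (l1 <> 0 -> U l1 l2 l3 l4) /\ (l2 <> 0 -> U l2 l1 l3 l4) /\ (l3 <> 0 -> U l3 l1 l2 l4) /\ (l4 <> 0 -> U l4 l1 l2 l3).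
Proof.
move=> Z1 Z2 Z3 Z4 E12 E13 E14 E23 E24 E34 Ex.
have N1 : l1 <> 0 -> A <> B by move=> h e; apply: h; apply/Z1.
have N2 : l2 <> 0 -> C <> D by move=> h e; apply: h; apply/Z2.
have N3 : l3 <> 0 -> A <> C by move=> h e; apply: h; apply/Z3.
have N4 : l4 <> 0 -> B <> D by move=> h e; apply: h; apply/Z4.
have Sn : forall p q r s, S p q r s -> p <> q /\ r <> s by move=> p q r s [? [? _]].
have NS : ~ (S A B C D \/ S A B A C \/ S A B B D \/ S C D A C \/ S C D B D \/ S A C B D).
  move=> Hc.
  have HP := @pairs A B C D; cbv zeta in HP.
  have [H1 [H2 [H3 H4]]] : (A <> B -> S A B C D \/ S A B A C \/ S A B B D) /\
     (C <> D -> S C D A B \/ S C D A C \/ S C D B D) /\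
     (A <> C -> S A C A B \/ S A C C D \/ S A C B D) /\ (B <> D -> S B D A B \/ S B D C D \/ S B D A C).
    apply: HP; case: Hc => [s|[s|[s|[s|[s|s]]]]].
    + by left; left.
    + by left; right; left.
    + by left; right; right.
    + by right; left; right; left.
    + by right; left; right; right.
    + by right; right; left; right; right.
  rewrite /U in Ex.
  case: Ex => [[h [u1 [u2 u3]]]|[[h [u1 [u2 u3]]]|[[h [u1 [u2 u3]]]|[h [u1 [u2 u3]]]]]].
  - case: (H1 (N1 h)) => [s|[s|s]]; [apply: u1; apply/E12 | apply: u2; apply/E13 | apply: u3; apply/E14]; by left.
  - case: (H2 (N2 h)) => [s|[s|s]]; [apply: u1; symmetry; apply/E12; left; exact: Ssym
      | apply: u2; apply/E23; by left | apply: u3; apply/E24; by left].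
  - case: (H3 (N3 h)) => [s|[s|s]]; [apply: u1; symmetry; apply/E13; left; exact: Ssym
      | apply: u2; symmetry; apply/E23; left; exact: Ssym | apply: u3; apply/E34; by left].
  - case: (H4 (N4 h)) => [s|[s|s]]; [apply: u1; symmetry; apply/E14; left; exact: Ssym
      | apply: u2; symmetry; apply/E24; left; exact: Ssym | apply: u3; symmetry; apply/E34; left; exact: Ssym].
  rewrite /U; split; [|split; [|split]] => h; (split; [|split]) => e.
  all: first [ case: (proj1 E12 e) | case: (proj1 E12 (esym e)) | case: (proj1 E13 e) | case: (proj1 E13 (esym e))
             | case: (proj1 E14 e) | case: (proj1 E14 (esym e)) | case: (proj1 E23 e) | case: (proj1 E23 (esym e))
             | case: (proj1 E24 e) | case: (proj1 E24 (esym e)) | case: (proj1 E34 e) | case: (proj1 E34 (esym e)) ].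
  all: try (move=> s; apply: NS; first [ exact (or_introl s) | exact (or_intror (or_introl s))
     | exact (or_intror (or_intror (or_introl s))) | exact (or_intror (or_intror (or_intror (or_introl s))))
     | exact (or_intror (or_intror (or_intror (or_intror (or_introl s)))))
     | exact (or_intror (or_intror (or_intror (or_intror (or_intror s))))) ]).
  all: move=> [e1 e2]; first [ exact: (N1 h e1) | exact: (N2 h e1) | exact: (N3 h e1) | exact: (N4 h e1)
                             | exact: (N1 h e2) | exact: (N2 h e2) | exact: (N3 h e2) | exact: (N4 h e2)
                             | (apply: (N1 h); congruence) | (apply: (N2 h); congruence)
                             | (apply: (N3 h); congruence) | (apply: (N4 h); congruence) ].
Qed.

Lemma cnt1 l1 l2 l3 l4 : count_mem l1 [:: l1; l2; l3; l4] = 1 <-> U l1 l2 l3 l4.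
Proof.
rewrite /= eqxx /U; case: (l2 =P l1); case: (l3 =P l1); case: (l4 =P l1) => /= e1 e2 e3;
split => // H; try (exfalso; lia); intuition congruence.
Qed.
Lemma cnt2 l1 l2 l3 l4 : count_mem l2 [:: l1; l2; l3; l4] = 1 <-> U l2 l1 l3 l4.
Proof.
rewrite /= eqxx /U; case: (l1 =P l2); case: (l3 =P l2); case: (l4 =P l2) => /= e1 e2 e3;
split => // H; try (exfalso; lia); intuition congruence.
Qed.
Lemma cnt3 l1 l2 l3 l4 : count_mem l3 [:: l1; l2; l3; l4] = 1 <-> U l3 l1 l2 l4.
Proof.
rewrite /= eqxx /U; case: (l1 =P l3); case: (l2 =P l3); case: (l4 =P l3) => /= e1 e2 e3;
split => // H; try (exfalso; lia); intuition congruence.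
Qed.
Lemma cnt4 l1 l2 l3 l4 : count_mem l4 [:: l1; l2; l3; l4] = 1 <-> U l4 l1 l2 l3.
Proof.
rewrite /= eqxx /U; case: (l1 =P l4); case: (l2 =P l4); case: (l3 =P l4) => /= e1 e2 e3;
split => // H; try (exfalso; lia); intuition congruence.
Qed.

Lemma face_mem n (tau : cell -> nat) f p q : Gamma n f = [:: p; q] -> 0 < tau p -> 0 < tau q ->
  forall x, x \in theta n tau f <-> (tau p <> tau q /\ (x = tau p \/ x = tau q)).
Proof.
move=> G Pp Pq x; rewrite mem_theta G /=.
move: (tau p) (tau q) Pp Pq => P Q Pp Pq.
rewrite !inE (eq_sym P x) (eq_sym Q x).
case: (x =P P) => [e1|n1]; case: (x =P Q) => [e2|n2] /=; subst.
- split => [/andP [_ /eqP]|[h _]] //.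
- rewrite Pp /=; split => // _; split => //; try (by left); by move=> e; apply: n2.
- rewrite Pq /=; split => // _; split => //; try (by right); by move=> e; apply: n1.
- split => // [[_ [e|e]]] //.
Qed.

Lemma face_active n (tau : cell -> nat) f p q : Gamma n f = [:: p; q] -> 0 < tau p -> 0 < tau q ->
  (active n tau f <-> tau p <> tau q).
Proof.
move=> G Pp Pq; split.
- by move/activeP => [x /(face_mem G Pp Pq) [h _]].
- move=> h; apply/activeP; exists (tau p); apply/(face_mem G Pp Pq); split => //; by left.
Qed.

Lemma theta_face_eq n (tau : cell -> nat) f g p q p' q' :
  Gamma n f = [:: p; q] -> Gamma n g = [:: p'; q'] ->
  0 < tau p -> 0 < tau q -> 0 < tau p' -> 0 < tau q' ->
  (theta n tau f = theta n tau g <->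
   S (tau p) (tau q) (tau p') (tau q') \/ (tau p = tau q /\ tau p' = tau q')).
Proof.
move=> G1 G2 P1 P2 P3 P4.
have M1 := face_mem G1 P1 P2; have M2 := face_mem G2 P3 P4.
split.
- move=> E.
  have M : forall x, (tau p <> tau q /\ (x = tau p \/ x = tau q)) <-> (tau p' <> tau q' /\ (x = tau p' \/ x = tau q')).
    by move=> x; rewrite -M1 -M2 E.
  case: (tau p =P tau q) => [e|ne].
  + right; split => //. case: (tau p' =P tau q') => // ne'.
    have := proj2 (M (tau p')) (conj ne' (or_introl erefl)). by case.
  + left. have [h1 h2] := proj1 (M (tau p)) (conj ne (or_introl erefl)).
    have [_ h3] := proj1 (M (tau q)) (conj ne (or_intror erefl)).
    rewrite /S; intuition congruence.
- move=> H; apply: theta_eq => x.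
  apply/idP/idP => h; [apply/(proj2 (M2 x)) | apply/(proj2 (M1 x))];
  [have := proj1 (M1 x) h | have := proj1 (M2 x) h]; rewrite /S in H; intuition congruence.
Qed.

Lemma inT_box n c : inT n c = inbox loT (hiT n) c. Proof. by []. Qed.

Lemma faces_tau_eq n sigma tau w f g : label_valid n sigma loT (hiT n) tau ->
  inT n w -> dim w = 1 -> f \in Gamma n w -> g \in Gamma n w ->
  (tau f = tau g <-> theta n tau f = theta n tau g).
Proof.
move=> Ht Tw Dw G1 G2.
have [T1 _] := GammaP G1; have [T2 _] := GammaP G2.
have D1 : dim f = 2 by rewrite (Gamma_dim G1) Dw.
have D2 : dim g = 2 by rewrite (Gamma_dim G2) Dw.
have B1 : inbox loT (hiT n) f := T1. have B2 : inbox loT (hiT n) g := T2.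
have Z1 := lv_zero Ht T1 (ltac:(by rewrite D1)); have Z2 := lv_zero Ht T2 (ltac:(by rewrite D2)).
have [_ [_ [Hpos [Ti _]]]] := Ht.
have Th0 : forall t, ~~ active n tau t -> theta n tau t = [::] by move=> t; rewrite /active negbK => /eqP.
case A1: (active n tau f); case A2: (active n tau g).
- have I := Ti f g T1 T2 (ltac:(by rewrite D1)) (ltac:(by rewrite D1 D2)) A1 A2.
  split.
  + move/I => [Pf C]. by case/and4P: (crt_P C Pf) => _ _ _ /eqP ->.
  + move=> E; apply/I; split; first by rewrite B1 eqxx A1 eqxx.
    apply: rt_step; split.
    * by rewrite B1 eqxx A1 eqxx.
    * by rewrite B2 D1 D2 eqxx A2 E eqxx.
    * exists w; split => //.
- have e2 : tau g = 0 by apply/Z2; rewrite A2.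
  have p1 : 0 < tau f := Hpos f T1 (ltac:(by rewrite D1)) A1.
  rewrite e2 (Th0 g (negbT A2)); split => E; first (exfalso; lia).
  by move: A1; rewrite /active E.
- have e1 : tau f = 0 by apply/Z1; rewrite A1.
  have p2 : 0 < tau g := Hpos g T2 (ltac:(by rewrite D2)) A2.
  rewrite e1 (Th0 f (negbT A1)); split => E; first (exfalso; lia).
  by move: A2; rewrite /active -E.
- have e1 : tau f = 0 by apply/Z1; rewrite A1.
  have e2 : tau g = 0 by apply/Z2; rewrite A2.
  by rewrite e1 e2 (Th0 f (negbT A1)) (Th0 g (negbT A2)).
Qed.

Lemma vox_pos n sigma tau v : segment_label_map n sigma -> label_valid n sigma loT (hiT n) tau ->
  inT n v -> dim v = 3 -> 0 < tau v.
Proof.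
move=> [Sp _] [L3 _] Tv Dv.
have E := dim3_voxel Dv. rewrite E L3 -?E //. apply: Sp. exact: vox_inG.
Qed.

Lemma edge_theta n sigma tau w : segment_label_map n sigma -> label_valid n sigma loT (hiT n) tau ->
  inT n w -> dim w = 1 -> active n tau w ->
  forall x, (x \in theta n tau w) = (x \in map tau (Gamma n w)) && (0 < x).
Proof.
move=> Hs Ht Tw Dw Aw.
have [f1 [f2 [f3 [f4 [v1 [v2 [v3 [v4 [G0 G1 G2 G3 G4]]]]]]]]] := edge_struct Tw Dw.
have Gf : forall f, f \in [:: f1; f2; f3; f4] -> [/\ f \in Gamma n w, inT n f & dim f = 2].
  move=> f Hf; have Gw : f \in Gamma n w by rewrite G0.
  split => //; first by case: (GammaP Gw). by rewrite (Gamma_dim Gw) Dw.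
have [g1 t1 d1] := Gf f1 (ltac:(by rewrite !inE eqxx)).
have [g2 t2 d2] := Gf f2 (ltac:(by rewrite !inE eqxx ?orbT)).
have [g3 t3 d3] := Gf f3 (ltac:(by rewrite !inE eqxx ?orbT)).
have [g4 t4 d4] := Gf f4 (ltac:(by rewrite !inE eqxx ?orbT)).
have Vp : forall f v, dim f = 2 -> v \in Gamma n f -> 0 < tau v.
  move=> f v Df Gv. apply: (vox_pos Hs Ht); first by case: (GammaP Gv).
  by rewrite (Gamma_dim Gv) Df.
have pA : 0 < tau v1 by apply: (Vp f1) => //; rewrite G1 inE eqxx.
have pB : 0 < tau v2 by apply: (Vp f1) => //; rewrite G1 !inE eqxx orbT.
have pC : 0 < tau v3 by apply: (Vp f2) => //; rewrite G2 inE eqxx.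
have pD : 0 < tau v4 by apply: (Vp f2) => //; rewrite G2 !inE eqxx orbT.
have Z : forall f p q, Gamma n f = [:: p; q] -> inT n f -> dim f = 2 -> 0 < tau p -> 0 < tau q ->
    (tau f = 0 <-> tau p = tau q).
  move=> f p q G Tf Df Pp Pq. rewrite (lv_zero Ht Tf (ltac:(by rewrite Df))).
  have [h1 h2] := face_active G Pp Pq. case: (tau p =P tau q) => e.
  + split => // _. apply/negP => a. exact: (h1 a e).
  + split => // /negP a; exfalso; exact: (a (h2 e)).
have EE : forall f g p q p' q', f \in Gamma n w -> g \in Gamma n w ->
    Gamma n f = [:: p; q] -> Gamma n g = [:: p'; q'] ->
    0 < tau p -> 0 < tau q -> 0 < tau p' -> 0 < tau q' ->
    (tau f = tau g <-> S (tau p) (tau q) (tau p') (tau q') \/ (tau p = tau q /\ tau p' = tau q')).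
  move=> f g p q p' q' Gf' Gg' Hf Hg P1 P2 P3 P4.
  rewrite (faces_tau_eq Ht Tw Dw Gf' Gg'). exact: theta_face_eq.
have C := comb (Z _ _ _ G1 t1 d1 pA pB) (Z _ _ _ G2 t2 d2 pC pD) (Z _ _ _ G3 t3 d3 pA pC)
  (Z _ _ _ G4 t4 d4 pB pD)
  (EE _ _ _ _ _ _ g1 g2 G1 G2 pA pB pC pD) (EE _ _ _ _ _ _ g1 g3 G1 G3 pA pB pA pC)
  (EE _ _ _ _ _ _ g1 g4 G1 G4 pA pB pB pD) (EE _ _ _ _ _ _ g2 g3 G2 G3 pC pD pA pC)
  (EE _ _ _ _ _ _ g2 g4 G2 G4 pC pD pB pD) (EE _ _ _ _ _ _ g3 g4 G3 G4 pA pC pB pD).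
have [C1 [C2 [C3 C4]]] : (tau f1 <> 0 -> U (tau f1) (tau f2) (tau f3) (tau f4)) /\
    (tau f2 <> 0 -> U (tau f2) (tau f1) (tau f3) (tau f4)) /\
    (tau f3 <> 0 -> U (tau f3) (tau f1) (tau f2) (tau f4)) /\
    (tau f4 <> 0 -> U (tau f4) (tau f1) (tau f2) (tau f3)).
  apply: C.
  move/activeP: Aw => [y]; rewrite mem_theta G0 /= !inE => /and3P [Hy Py Cy].
  have Py' : y <> 0 by lia.
  case/or4P: Hy => /eqP Ey; subst y.
  - by left; split => //; apply/cnt1/eqP.
  - by right; left; split => //; apply/cnt2/eqP.
  - by right; right; left; split => //; apply/cnt3/eqP.
  - by right; right; right; split => //; apply/cnt4/eqP.
move=> x; rewrite mem_theta G0 /= !inE.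
case Hx: [|| _, _, _ | _] => //=; case Px: (0 < x) => //=.
have Px' : x <> 0 by move: Px; case: x {Hx}.
apply/eqP.
case/or4P: Hx => /eqP Ex; subst x.
- by apply/cnt1; apply: C1.
- by apply/cnt2; apply: C2.
- by apply/cnt3; apply: C3.
- by apply/cnt4; apply: C4.
Qed.


Lemma G_core n1 n2 n3 sigma A1 A2 A3 bl lam tau rep1 rep2 (c : nat -> nat) t0 w1 w2 :
  segment_label_map (n1, n2, n3) sigma -> Ctx n1 n2 n3 sigma A1 A2 A3 bl lam tau ->
  is_rep (unite A1 A2 A3 bl lam 1) rep1 -> is_rep (unite A1 A2 A3 bl lam 2) rep2 ->
  c 0 = 0 -> inT (n1, n2, n3) t0 -> dim t0 = 0 ->
  w1 \in Gamma (n1, n2, n3) t0 -> w2 \in Gamma (n1, n2, n3) t0 ->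
  0 < c (lab3 A1 A2 A3 bl lam rep1 w1) -> 0 < c (lab3 A1 A2 A3 bl lam rep1 w2) ->
  map (lab3 A1 A2 A3 bl lam rep2) (Gamma (n1, n2, n3) w1) =i map (lab3 A1 A2 A3 bl lam rep2) (Gamma (n1, n2, n3) w2) ->
  tau w1 = tau w2.
Proof.
move=> Hs C R1 R2 c0 Tt0 Dt0 G1 G2 P1 P2 Hb.
have C' := C; case: C' => V1 V2 V3 Hp [Hl Ht].
have [T1 _] := GammaP G1; have [T2 _] := GammaP G2.
have D1 : dim w1 = 1 by rewrite (Gamma_dim G1) Dt0.
have D2 : dim w2 = 1 by rewrite (Gamma_dim G2) Dt0.
have Act : forall w, inT (n1, n2, n3) w -> dim w = 1 -> 0 < c (lab3 A1 A2 A3 bl lam rep1 w) -> active (n1, n2, n3) tau w.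
  move=> w Tw Dw Pw.
  have : 0 < lab3 A1 A2 A3 bl lam rep1 w by move: Pw; case: (lab3 _ _ _ _ _ _ w) => //; rewrite c0.
  move/lab3_pos_blk => [k [B Pk]]. exact: (pos_active_blk C B Dw Pk).
have A1' := Act _ T1 D1 P1; have A2' := Act _ T2 D2 P2.
have Sub : forall wa wb, wa \in Gamma (n1, n2, n3) t0 -> wb \in Gamma (n1, n2, n3) t0 ->
    map (lab3 A1 A2 A3 bl lam rep2) (Gamma (n1, n2, n3) wa) =i map (lab3 A1 A2 A3 bl lam rep2) (Gamma (n1, n2, n3) wb) ->
    0 < c (lab3 A1 A2 A3 bl lam rep1 wa) -> 0 < c (lab3 A1 A2 A3 bl lam rep1 wb) ->
    {subset theta (n1, n2, n3) tau wa <= theta (n1, n2, n3) tau wb}.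
  move=> wa wb Ga Gb Hab Pa Pb x.
  have [Ta _] := GammaP Ga; have [Tb _] := GammaP Gb.
  have Da : dim wa = 1 by rewrite (Gamma_dim Ga) Dt0.
  have Db : dim wb = 1 by rewrite (Gamma_dim Gb) Dt0.
  rewrite (edge_theta Hs Ht Ta Da (Act _ Ta Da Pa)) (edge_theta Hs Ht Tb Db (Act _ Tb Db Pb)).
  case/andP => /mapP [s Gs ->] Ps; rewrite Ps andbT.
  have [Ts _] := GammaP Gs. have Ds : dim s = 2 by rewrite (Gamma_dim Gs) Da.
  have As : active (n1, n2, n3) tau s.
    case A: (active (n1, n2, n3) tau s) => //.
    have E0 := (proj2 (lv_zero Ht Ts (ltac:(by rewrite Ds)))) (negbT A). by rewrite E0 in Ps.
  have L2p := active_lab3_pos C (or_intror erefl) R2 Ts Ds As.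
  have : lab3 A1 A2 A3 bl lam rep2 s \in map (lab3 A1 A2 A3 bl lam rep2) (Gamma (n1, n2, n3) wb).
    by rewrite -Hab map_f.
  case/mapP => s' Gs' E.
  have [Ts' _] := GammaP Gs'. have Ds' : dim s' = 2 by rewrite (Gamma_dim Gs') Db.
  rewrite (lab3_sound C (or_intror erefl) R2 Ts Ts' Ds Ds' E). exact: map_f.
have Th : theta (n1, n2, n3) tau w1 = theta (n1, n2, n3) tau w2.
  apply: theta_eq => x; apply/idP/idP; [apply: Sub | apply: Sub] => //.
have [_ [_ [_ [Ti _]]]] := Ht.
have B1 : inbox loT (hiT (n1, n2, n3)) w1 := T1. have B2 : inbox loT (hiT (n1, n2, n3)) w2 := T2.
apply/(Ti w1 w2 T1 T2 (ltac:(by rewrite D1)) (ltac:(by rewrite D1 D2)) A1' A2').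
split; first by rewrite B1 eqxx A1' eqxx.
apply: rt_step; split.
- by rewrite B1 eqxx A1' eqxx.
- by rewrite B2 D1 D2 eqxx A2' Th eqxx.
- by exists t0.
Qed.

Lemma step_inv n1 n2 n3 sigma A1 A2 A3 bl lam tau rep1 rep2 (c c' : nat -> nat) t0 :
  segment_label_map (n1, n2, n3) sigma -> Ctx n1 n2 n3 sigma A1 A2 A3 bl lam tau ->
  is_rep (unite A1 A2 A3 bl lam 1) rep1 -> is_rep (unite A1 A2 A3 bl lam 2) rep2 ->
  inT (n1, n2, n3) t0 -> dim t0 = 0 ->
  step4 (n1, n2, n3) (lab3 A1 A2 A3 bl lam rep1) (lab3 A1 A2 A3 bl lam rep2) c t0 c' ->
  c 0 = 0 /\ (forall u v, inT (n1, n2, n3) u -> inT (n1, n2, n3) v -> dim u = 1 -> dim v = 1 ->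
     c (lab3 A1 A2 A3 bl lam rep1 u) = c (lab3 A1 A2 A3 bl lam rep1 v) -> tau u = tau v) ->
  c' 0 = 0 /\ (forall u v, inT (n1, n2, n3) u -> inT (n1, n2, n3) v -> dim u = 1 -> dim v = 1 ->
     c' (lab3 A1 A2 A3 bl lam rep1 u) = c' (lab3 A1 A2 A3 bl lam rep1 v) -> tau u = tau v).
Proof.
set n := (n1, n2, n3). set L1 := lab3 A1 A2 A3 bl lam rep1. set L2 := lab3 A1 A2 A3 bl lam rep2.
move=> Hs C R1 R2 Tt0 Dt0 [rep [[Rr1 Rr2] Ec]] [c0 IH].
set pair := (fun x y => exists w1 w2, _) in Rr1 Rr2.
have Ppos : forall a b, pair a b -> 0 < a /\ 0 < b.
  move=> a b [w1 [w2 [_ [_ [/andP [p1 _] [/andP [p2 _] [_ [_ [-> ->]]]]]]]]]. by split.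
have Cpos : forall a b, clos_refl_sym_trans nat pair a b -> a = b \/ (0 < a /\ 0 < b).
  move=> a b; elim => [x y /Ppos [? ?]| x | x y _ IH1 | x y z _ IH1 _ IH2]; auto.
  - case: IH1 => [->|[? ?]]; auto.
  - case: IH1 => [->|[? ?]] //; case: IH2 => [<-|[? ?]]; auto.
split.
  rewrite Ec /= c0. case: (Cpos _ _ (Rr2 0)) => [<- //|[]]. by [].
set RealW := fun x => exists w, [/\ inT n w, dim w = 1 & c (L1 w) = x].
set QQ4 := fun x y => (forall u v, inT n u -> inT n v -> dim u = 1 -> dim v = 1 ->
   c (L1 u) = x -> c (L1 v) = y -> tau u = tau v) /\ (x = y \/ (RealW x /\ RealW y)).
have Qc : forall a b, clos_refl_sym_trans nat pair a b -> QQ4 a b.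
  move=> a b; elim => [x y | x | x y _ [IH1 IH2] | x y z _ [Q1 O1] _ [Q2 O2]].
  - move=> [w1 [w2 [G1 [G2 [/andP [p1 _] [/andP [p2 _] [_ [Hb [Ex Ey]]]]]]]]].
    have [T1 _] := GammaP G1; have [T2 _] := GammaP G2.
    have D1 : dim w1 = 1 by rewrite (Gamma_dim G1) Dt0.
    have D2 : dim w2 = 1 by rewrite (Gamma_dim G2) Dt0.
    have E12 : tau w1 = tau w2 := G_core Hs C R1 R2 c0 Tt0 Dt0 G1 G2 p1 p2 Hb.
    split; last by right; split; [exists w1; split | exists w2; split].
    move=> u v Tu Tv Du Dv Eu Ev.
    rewrite (IH u w1) // ?E12; last by rewrite Eu.
    apply: IH => //; by rewrite Ev.
  - split; last by left. move=> u v Tu Tv Du Dv Eu Ev. apply: IH => //; by rewrite Eu Ev.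
  - split; last by case: IH2 => [->|[? ?]]; [left | right].
    move=> u v Tu Tv Du Dv Eu Ev; symmetry; exact: (IH1 v u).
  - split; last first.
      case: O1 => [E|[Ra Rb]]; first by subst y.
      case: O2 => [E|[_ Rc]]; first by subst z; right.
      by right.
    move=> u v Tu Tv Du Dv Eu Ev.
    case: O1 => [E|[_ [wy [Ty Dy Ey]]]].
    + subst y; exact: (Q2 u v).
    + rewrite (Q1 u wy) //; exact: (Q2 wy v).
move=> u v Tu Tv Du Dv; rewrite !Ec /= => /Rr1 Hc.
have [Q _] := Qc _ _ Hc. exact: Q.
Qed.

Theorem proposition5 (n1 n2 n3 : nat) (sigma : cell -> nat)
    (A1 A2 A3 : seq nat) (tau tau' : cell -> nat) :
  segment_label_map (n1, n2, n3) sigma ->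
  valid_axis n1 A1 -> valid_axis n2 A2 -> valid_axis n3 A3 ->
  label_valid (n1, n2, n3) sigma loT (hiT (n1, n2, n3)) tau ->
  blockwise_out (n1, n2, n3) sigma A1 A2 A3 tau' ->
  forall u v : cell, inT (n1, n2, n3) u -> inT (n1, n2, n3) v ->
    dim u = 1 -> dim v = 1 ->
    tau' u = tau' v -> tau u = tau v.
Proof.
move=> Hs V1 V2 V3 Ht [bl [lam [rep1 [rep2 [ord0 [cur [Hp [Hl [R1 [R2 [Ho [H0 [Hst [Hres1 _]]]]]]]]]]]]]] u v Tu Tv Du Dv E.
have C : Ctx n1 n2 n3 sigma A1 A2 A3 bl lam tau by split.
have Inv : forall i, i <= size ord0 ->
  cur i 0 = 0 /\ (forall u v, inT (n1, n2, n3) u -> inT (n1, n2, n3) v -> dim u = 1 -> dim v = 1 ->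
     cur i (lab3 A1 A2 A3 bl lam rep1 u) = cur i (lab3 A1 A2 A3 bl lam rep1 v) -> tau u = tau v).
  elim => [_|i IH Hi].
  - split; first by rewrite H0.
    move=> a b Ta Tb Da Db; rewrite !H0 => Eab.
    exact: (lab3_sound C (or_introl erefl) R1 Ta Tb Da Db Eab).
  - have Hi' : i < size ord0 by [].
    have Mt : nth (0, 0, 0) ord0 i \in [seq t <- cells_box loT (hiT (n1, n2, n3)) | dim t == 0].
      by rewrite -(perm_mem Ho) mem_nth.
    rewrite mem_filter mem_cells_box in Mt. case/andP: Mt => /eqP Dt Bt.
    apply: (step_inv Hs C R1 R2 Bt Dt (Hst i Hi')).
    exact: IH (ltnW Hi').
have [_ F] := Inv (size ord0) (leqnn _).
apply: F => //. by rewrite -Hres1 // -Hres1.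
Qed.
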